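(* Let $M_G$ be a mixed graph of order $n$ such that $N(M_G)$ has rank $2$. Then $M_G$ is switching equivalent to the (undirected) graph $K_{a,b}\cup tK_1$ for some integers $a,b\ge1$, $t\ge0$.
   Context: A mixed graph $M_G$ is obtained from a finite simple graph $G$ by orienting the edges of some subset of $E(G)$. With $\omega=\frac{1+\mathbf{i}\sqrt3}{2}$, $N(M_G)$ has $(u,v)$-entry $\omega$ if $\overrightarrow{uv}$ is an arc, $\bar\omega$ if $\overrightarrow{vu}$ is an arc, $1$ for an undirected edge, $0$ otherwise. $\mathbb{T}_6=\{1,-1,\omega,\bar\omega,-\omega,-\bar\omega\}$. Given a partition $V(M_G)=\bigcup_{j\in\mathbb{T}_6}V_j$ into six possibly empty sets, an edge or arc $xy$ has type $(j,k)$ if $x\in V_j,y\in V_k$ (arcs directed from $x$ to $y$). The partition is admissible if every undirected edge has type $(j,j)$ or $(j,\omega j)$, and every arc has type $(j,j)$, $(j,\bar\omega j)$ or $(j,-\omega j)$, for some $j$. A three-way switching w.r.t. an admissible partition replaces each undirected edge of type $(j,\omega j)$ by an arc from $V_j$ to $V_{\omega j}$, replaces each arc of type $(j,\bar\omega j)$ by an undirected edge, and reverses each arc of type $(j,-\omega j)$. The converse of a mixed graph reverses all arcs. Two mixed graphs are switching equivalent if one is obtained from the other by a sequence of three-way switchings and taking converses. $K_{a,b}\cup tK_1$ is the complete bipartite graph $K_{a,b}$ together with $t$ isolated vertices. *)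

(* Defs.v *)
From HB Require Import structures.
From mathcomp Require Import all_boot all_order all_algebra all_field.
From Stdlib Require Import Relations.
Set Implicit Arguments. Unset Strict Implicit. Unset Printing Implicit Defensive.
Import Order.TTheory GRing.Theory Num.Theory.
Local Open Scope ring_scope.

(* Mixed graphs on vertex set 'I_n.  [g x y] describes the pair (x,y):
   NoE     : no edge between x and y
   UE      : undirected edge xy
   ArcTo   : arc from x to y
   ArcFrom : arc from y to x *)
Inductive medge := NoE | UE | ArcTo | ArcFrom.

Definition rev_medge (e : medge) : medge :=
  match e with NoE => NoE | UE => UE | ArcTo => ArcFrom | ArcFrom => ArcTo end.

Definition mgraph (n : nat) := 'I_n -> 'I_n -> medge.

Definition is_mixed_graph n (g : mgraph n) : Prop :=
  (forall x, g x x = NoE) /\ (forall x y, g y x = rev_medge (g x y)).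

Definition omega : algC := (1 + 'i * sqrtC 3%:R) / 2%:R.

Definition medge_val (e : medge) : algC :=
  match e with NoE => 0 | UE => 1 | ArcTo => omega | ArcFrom => omega^* end.

Definition Nmat n (g : mgraph n) : 'M[algC]_n :=
  \matrix_(u, v) medge_val (g u v).

Definition T6 : seq algC := [:: 1; -1; omega; omega^*; - omega; - omega^*].

(* a partition into the six sets V_j, j in T6, given by x |-> j when x in V_j *)
Definition admissible n (g : mgraph n) (p : 'I_n -> algC) : Prop :=
  (forall x, p x \in T6) /\
  (forall x y, g x y = UE ->
     [\/ p y = p x, p y = omega * p x | p x = omega * p y]) /\
  (forall x y, g x y = ArcTo ->
     [\/ p y = p x, p y = omega^* * p x | p y = - omega * p x]).

Definition switch_edge n (g : mgraph n) (p : 'I_n -> algC) : mgraph n :=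
  fun x y =>
  match g x y with
  | NoE => NoE
  | UE => if p y == omega * p x then ArcTo
          else if p x == omega * p y then ArcFrom else UE
  | ArcTo => if p y == omega^* * p x then UE
             else if p y == - omega * p x then ArcFrom else ArcTo
  | ArcFrom => if p x == omega^* * p y then UE
               else if p x == - omega * p y then ArcTo else ArcFrom
  end.

Definition converse n (g : mgraph n) : mgraph n := fun x y => rev_medge (g x y).

Definition switch_step n (g h : mgraph n) : Prop :=
  (exists p, admissible g p /\ forall x y, h x y = switch_edge g p x y)
  \/ (forall x y, h x y = converse g x y).

Definition switching_equiv n (g h : mgraph n) : Prop :=
  clos_refl_trans (mgraph n) (@switch_step n) g h \/
  clos_refl_trans (mgraph n) (@switch_step n) h g.

Definition Kbip n (A B : {set 'I_n}) : mgraph n :=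
  fun x y => if ((x \in A) && (y \in B)) || ((x \in B) && (y \in A)) then UE else NoE.

(* Main.v *)
Require Import Defs.
From HB Require Import structures.
From mathcomp Require Import all_boot all_order all_algebra all_field.
From mathcomp Require Import ring.
From Stdlib Require Import Relations.
Import Order.TTheory GRing.Theory Num.Theory.
Local Open Scope ring_scope.

Lemma det3 (R : comNzRingType) (f : nat -> nat -> R) :
  \det (\matrix_(i < 3, j < 3) f i j) = f 0 0 * (f 1 1 * f 2 2 - f 1 2 * f 2 1)
         - f 0 1 * (f 1 0 * f 2 2 - f 1 2 * f 2 0)
         + f 0 2 * (f 1 0 * f 2 1 - f 1 1 * f 2 0).
Proof.
rewrite (expand_det_row _ 0) !big_ord_recr big_ord0 /= add0r.
rewrite /cofactor !(expand_det_row _ 0) !big_ord_recr big_ord0 /= !add0r.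
rewrite /cofactor !det_mx11 !mxE /=.
rewrite !big_ord0 !add0r /bump /=. ring.
Qed.

Lemma sub_rank (F : fieldType) m n m' n' (f : 'I_m' -> 'I_m) (g : 'I_n' -> 'I_n)
  (A : 'M[F]_(m, n)) : (\rank (mxsub f g A) <= \rank A)%N.
Proof.
have -> : mxsub f g A = rowsub f 1%:M *m (A *m colsub g 1%:M).
  by rewrite mulmx_colsub mulmx1 -mxsub_mul mul1mx.
apply: leq_trans (mxrankM_maxr _ _) _; exact: mxrankM_maxl.
Qed.

Lemma omega_conj : omega^* = 1 - omega.
Proof.
have s0 : 0 <= sqrtC (3%:R : algC) by rewrite sqrtC_ge0 ler0n.
rewrite /omega rmorphM rmorphD /= rmorph1 rmorphM /= conjCi.
rewrite (geC0_conj s0) fmorphV /= conjC_nat.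
by field.
Qed.

Lemma omega_sq : omega * omega = omega - 1.
Proof.
have s3 : sqrtC (3%:R : algC) ^+ 2 = 3%:R by rewrite sqrtCK.
have i2 : 'i ^+ 2 = - 1 :> algC by rewrite sqrCi.
have h : omega * omega - (omega - 1) = (3%:R + ('i * sqrtC 3%:R)^+2) / 4%:R.
  by rewrite /omega; field.
apply/eqP; rewrite -subr_eq0 h exprMn i2 s3.
by rewrite mulN1r subrr mul0r.
Qed.

Lemma omega_nz : omega != 0.
Proof. apply/eqP=> h; have := omega_sq; rewrite h mul0r sub0r => /eqP.
by rewrite eq_sym oppr_eq0 oner_eq0. Qed.

Lemma omega_neq1 : omega != 1.
Proof. apply/eqP=> h; have := omega_sq; rewrite h mul1r subrr => /eqP.
by rewrite oner_eq0. Qed.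

Lemma omega_unit : omega * omega^* = 1.
Proof. by rewrite omega_conj mulrBr mulr1 omega_sq; ring. Qed.

Lemma omega6 : omega ^+ 6 = 1.
Proof.
have h3 : omega ^+ 3 = -1 by rewrite !exprS expr0 mulr1 omega_sq; rewrite mulrBr omega_sq; ring.
by rewrite (_ : 6 = 3 * 2)%N // exprM h3 sqrrN expr1n.
Qed.

Lemma omega_sq' : omega * omega = - omega^*.
Proof. by rewrite omega_sq omega_conj opprB. Qed.

Lemma omegac_sq : omega^* * omega^* = - omega.
Proof. by rewrite -rmorphM omega_sq' rmorphN /= conjCK. Qed.

Definition good (x : algC) := x * x^* = 1 /\ x ^+ 6 = 1.

Lemma good_mul {x y} : good x -> good y -> good (x * y).
Proof.
move=> [h1 h2] [h3 h4]; split; last by rewrite exprMn h2 h4 mulr1.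
by rewrite rmorphM /= mulrACA h1 h3 mulr1.
Qed.

Lemma good_conj {x} : good x -> good x^*.
Proof.
move=> [h1 h2]; split; first by rewrite conjCK mulrC.
by rewrite -rmorphXn h2 rmorph1.
Qed.

Lemma good_sum_nz {x} : good x -> x + x^* != 0.
Proof.
move=> [h1 h2]; apply/negP => /eqP h.
have hc : x^* = - x by apply/eqP; rewrite -subr_eq0 opprK addrC h.
have hx2 : x ^+ 2 = -1 by rewrite expr2 -[x * x]opprK -mulrN -hc h1.
have : x ^+ 6 = -1 by rewrite (_ : 6 = 2 * 3)%N // exprM hx2; ring.
rewrite h2 => /eqP; rewrite -subr_eq0 opprK (_ : (1 + 1 : algC) = 2%:R) //.
by rewrite pnatr_eq0.
Qed.

Lemma conj_val e : (medge_val e)^* = medge_val (rev_medge e).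
Proof. by case: e => /=; rewrite ?rmorph0 ?rmorph1 ?conjCK. Qed.

Lemma val_good e : medge_val e != 0 -> good (medge_val e).
Proof.
have go : good omega by split; [exact: omega_unit | exact: omega6].
case: e => /=; rewrite ?eqxx // => _.
- by split; rewrite ?expr1n ?rmorph1 ?mulr1.
- exact: good_conj.
Qed.

Lemma val_eq0 e : medge_val e = 0 -> e = NoE.
Proof.
case: e => //= /eqP; rewrite ?oner_eq0 ?conjC_eq0 ?(negbTE omega_nz) //.
Qed.

Lemma val_T6 e : medge_val e != 0 -> medge_val e \in T6.
Proof. by case: e => /=; rewrite ?eqxx // => _; rewrite /T6 !inE ?eqxx ?orbT. Qed.

Lemma val2_T6 e1 e2 : medge_val e1 != 0 -> medge_val e2 != 0 ->
  medge_val e1 * medge_val e2 \in T6.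
Proof.
case: e1; rewrite //= ?eqxx // => _; case: e2; rewrite //= ?eqxx // => _;
 rewrite ?mul1r ?mulr1 ?omega_sq' ?omegac_sq ?omega_unit
   ?(mulrC omega^* omega) ?omega_unit /T6 !inE ?eqxx ?orbT //.
Qed.

Lemma unit_eq {a b c : algC} : a * a^* = 1 -> c^* * c = 1 -> c * b * a^* = 1 ->
  b = c^* * a.
Proof.
move=> ha hc h.
have e : c^* * (c * b * a^*) * a = (c^* * c) * b * (a * a^*) by ring.
by move: e; rewrite h mulr1 hc mul1r ha mulr1 => ->.
Qed.

Lemma px_nz {a : algC} : a * a^* = 1 -> a != 0.
Proof. by move=> h; apply/eqP => h0; move: h; rewrite h0 mul0r => /eqP; rewrite eq_sym oner_eq0. Qed.

Lemma sw_UE n (g : mgraph n) (p : 'I_n -> algC) x y :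
  p x * (p x)^* = 1 -> medge_val (g x y) != 0 ->
  medge_val (g x y) * p y * (p x)^* = 1 -> switch_edge g p x y = UE.
Proof.
move=> hp; have px0 := px_nz hp.
rewrite /switch_edge; case: (g x y) => /=; rewrite ?eqxx // => _ h.
- have hc : (1 : algC)^* * 1 = 1 by rewrite rmorph1 mulr1.
  have e := unit_eq hp hc h.
  rewrite rmorph1 mul1r in e; rewrite e.
  have -> : (p x == omega * p x) = false.
    apply/negbTE/eqP => h1.
    have : (1 - omega) * p x = 0 by rewrite mulrBl mul1r -h1 subrr.
    move/eqP; rewrite mulf_eq0 (negbTE px0) orbF subr_eq0 eq_sym.
    by rewrite (negbTE omega_neq1).
  by [].
- have hc : omega^* * omega = 1 by rewrite mulrC omega_unit.
  have e := unit_eq hp hc h.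
  by rewrite e eqxx.
- have hc : omega^*^* * omega^* = 1 by rewrite conjCK omega_unit.
  have e := unit_eq hp hc h.
  by rewrite e conjCK mulrA (mulrC omega^* omega) omega_unit mul1r eqxx.
Qed.

Lemma minor0 n (N : 'M[algC]_n) (r c : nat -> 'I_n) : \rank N = 2%N ->
  \det (\matrix_(i < 3, j < 3) N (r i) (c j)) = 0.
Proof.
move=> Hr; apply/eqP; apply: contraT => hdet.
have hu : \matrix_(i < 3, j < 3) N (r i) (c j) \in unitmx by rewrite unitmxE unitfE.
have h3 := mxrank_unit hu.
have : (\rank (\matrix_(i < 3, j < 3) N (r i) (c j)) <= \rank N)%N.
  have -> : \matrix_(i < 3, j < 3) N (r i) (c j) =
     mxsub (fun i : 'I_3 => r i) (fun j : 'I_3 => c j) N.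
    by apply/matrixP => i j; rewrite !mxE.
  exact: sub_rank.
by rewrite h3 Hr.
Qed.

Lemma prod_unit3 {a b c : algC} : a * a^* = 1 -> b * b^* = 1 -> c * c^* = 1 ->
  forall X, X = (a * a^*) * (b * b^*) * (c * c^*) -> X = 1.
Proof. by move=> ha hb hc X ->; rewrite ha hb hc !mulr1. Qed.

Theorem theorem5p9 (n : nat) (g : mgraph n) :
  is_mixed_graph g -> \rank (Nmat g) = 2%N ->
  exists (a b t : nat) (A B : {set 'I_n}),
    [/\ (1 <= a)%N, (1 <= b)%N & (a + b + t)%N = n] /\
    [/\ #|A| = a, #|B| = b & [disjoint A & B]] /\
    switching_equiv g (Kbip A B).
Proof.
move=> [Hd Hs] Hr.
set N := Nmat g in Hr.
have NE : forall x y, N x y = medge_val (g x y) by move=> x y; rewrite mxE.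
have Nd : forall x, N x x = 0 by move=> x; rewrite NE Hd.
have Nh : forall x y, N y x = (N x y)^* by move=> x y; rewrite !NE Hs conj_val.
have Ng : forall x y, N x y != 0 -> good (N x y) by move=> x y; rewrite NE; exact: val_good.
have Nminor : forall u v w x, N u v * N v u = 1 ->
    N w x = N u v * N v x * N w u + N v u * N u x * N w v.
  move=> u v w x huv.
  pose r := fun i : nat => if i == 0%N then u else if i == 1%N then v else w.
  pose c := fun i : nat => if i == 0%N then u else if i == 1%N then v else x.
  have H := @minor0 n N r c Hr.
  rewrite (@det3 _ (fun i j => N (r i) (c j))) /r /c /= in H.
  transitivity (N u v * N v u * N w x); first by rewrite huv mul1r.
  apply/eqP; rewrite -subr_eq0 -oppr_eq0 -H !Nd; apply/eqP; ring.
have [u [v huv]] : exists u v, N u v != 0.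
  case: (boolP [exists u, [exists v, N u v != 0]]).
    by move=> /existsP [u /existsP [v h]]; exists u, v.
  move=> /existsPn h; exfalso.
  have N0 : N = 0.
    apply/matrixP => x y; rewrite [RHS]mxE; apply/eqP.
    by move: (h x) => /existsPn /(_ y); rewrite negbK.
  by move: Hr; rewrite N0 mxrank0.
have ga := Ng _ _ huv.
have hau : N u v * N v u = 1 by rewrite (Nh u v); exact: (proj1 ga).
have hvu : N v u != 0 by rewrite Nh conjC_eq0.
have Ndisj : forall w, (N w u == 0) || (N w v == 0).
  move=> w; apply: contraT; rewrite negb_or => /andP [h1 h2].
  have e := Nminor u v w w hau; rewrite Nd in e.
  have hvw : N v w != 0 by rewrite Nh conjC_eq0.
  have gs := good_mul (good_mul ga (Ng _ _ hvw)) (Ng _ _ h1).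
  have hz : N u v * N v w * N w u + (N u v * N v w * N w u)^* = 0.
    by rewrite !rmorphM /= -!Nh e; ring.
  by have := good_sum_nz gs; rewrite hz eqxx.
pose A := [set w | N w v != 0].
pose B := [set w | N w u != 0].
pose p := fun w => if N w v != 0 then N w v else if N w u != 0 then N u v * N w u else 1.
have Kiff : forall x y, (N x y != 0) = ((x \in A) && (y \in B)) || ((x \in B) && (y \in A)).
  move=> x y; rewrite !inE (Nminor u v x y hau).
  case: (boolP (N x v != 0)) => hxv /=.
  - have hxu : N x u = 0 by move: (Ndisj x); rewrite (negbTE hxv) orbF => /eqP.
    rewrite hxu eqxx mulr0 add0r (Nh y u) /= orbF.
    by rewrite !mulf_eq0 conjC_eq0 (negbTE hvu) (negbTE hxv) /= orbF.
  - move/negPn/eqP: hxv => hxv.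
    rewrite hxv mulr0 addr0 (Nh y v).
    by rewrite !mulf_eq0 conjC_eq0 (negbTE huv) /= !negb_or andbC.
have C : forall x y, N x y != 0 -> N x y * p y * (p x)^* = 1.
  move=> x y hxy; have := hxy; rewrite Kiff !inE.
  case/orP => [/andP [hxv hyu] | /andP [hxu hyv]].
  - have hxu : N x u = 0 by move: (Ndisj x); rewrite (negbTE hxv) orbF => /eqP.
    have hyv : N y v = 0 by move: (Ndisj y); rewrite (negbTE hyu) /= => /eqP.
    rewrite /p hxv hyv eqxx /= hyu (Nminor u v x y hau) hxu mulr0 add0r.
    rewrite (Nh u v) (Nh y u).
    apply: (prod_unit3 (proj1 ga) (proj1 (Ng _ _ hyu)) (proj1 (Ng _ _ hxv))); ring.
  - have hxv : N x v = 0 by move: (Ndisj x); rewrite (negbTE hxu) /= => /eqP.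
    have hyu : N y u = 0 by move: (Ndisj y); rewrite (negbTE hyv) orbF => /eqP.
    rewrite /p hxv hyv eqxx /= hxu (Nminor u v x y hau) hxv mulr0 addr0.
    rewrite (Nh y v) !rmorphM /=.
    apply: (prod_unit3 (proj1 ga) (proj1 (Ng _ _ hyv)) (proj1 (Ng _ _ hxu))); ring.
have punit : forall x, p x * (p x)^* = 1.
  move=> x; rewrite /p; case: ifP => h1; first exact: (proj1 (Ng _ _ h1)).
  case: ifP => h2; first exact: (proj1 (good_mul ga (Ng _ _ h2))).
  by rewrite rmorph1 mulr1.
have pT6 : forall x, p x \in T6.
  move=> x; rewrite /p; case: ifP => h1; first by move: h1; rewrite NE; exact: val_T6.
  case: ifP => h2; first by move: huv h2; rewrite !NE; exact: val2_T6.
  by rewrite /T6 inE eqxx.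
have hA : [disjoint A & B].
  rewrite -setI_eq0; apply/eqP/setP => w; rewrite !inE.
  by case/orP: (Ndisj w) => /eqP ->; rewrite eqxx ?andbF.
have hAB : (#|A| + #|B| <= n)%N.
  rewrite -cardsUI.
  move: hA; rewrite -setI_eq0 => /eqP ->; rewrite cards0 addn0.
  by apply: leq_trans (max_card _) _; rewrite card_ord.
exists #|A|, #|B|, (n - (#|A| + #|B|))%N, A, B.
split; first split.
- by apply/card_gt0P; exists u; rewrite inE.
- by apply/card_gt0P; exists v; rewrite inE.
- by rewrite subnKC.
split; first by split.
left; apply: rt_step; left; exists p; split.
  split; first exact: pT6.
  split.
  - move=> x y hxy.
    have hn : N x y != 0 by rewrite NE hxy /= oner_eq0.
    have := C x y hn; rewrite NE hxy /= => h.
    have hc : (1 : algC)^* * 1 = 1 by rewrite rmorph1 mulr1.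
    have e := unit_eq (punit x) hc h.
    by apply: Or31; rewrite e rmorph1 mul1r.
  - move=> x y hxy.
    have hn : N x y != 0 by rewrite NE hxy /= omega_nz.
    have := C x y hn; rewrite NE hxy /= => h.
    have hc : omega^* * omega = 1 by rewrite mulrC omega_unit.
    have e := unit_eq (punit x) hc h.
    by apply: Or32.
move=> x y; rewrite /Kbip -Kiff.
case: (boolP (N x y != 0)) => hn.
- symmetry; apply: sw_UE; first exact: punit.
    by rewrite -NE.
  by rewrite -!NE; exact: C.
- move/negPn/eqP: hn; rewrite NE => /val_eq0 h0.
  by rewrite /switch_edge h0.
Qed.
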